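(* Let $F$ be a countably infinite graph. Then every graph $H$ on vertex set $\mathbb{N}$ having infinitely many vertices of cofinite degree contains a subgraph isomorphic to $F$ whose vertex set is cofinite in $\mathbb{N}$ if and only if $F$ is strongly contracting.
   Context: A vertex $v$ of $H$ has cofinite degree if it is adjacent to all but finitely many vertices of $H$. $F$ is strongly contracting if there is $k\in\mathbb{N}$ such that for every $\ell\in\mathbb{N}$ there is an independent set $A$ in $F$ with $|A|\ge\ell$ and $|N(A)|\le k$, where $N(A)=\bigcup_{v\in A}N(v)$. *)

(* Defs.v *)
From Stdlib Require Import List Arith.
Import ListNotations.

Definition is_graph {V : Type} (adj : V -> V -> Prop) : Prop :=
  (forall x y, adj x y -> adj y x) /\ (forall x, ~ adj x x).

Definition finite_set {T : Type} (P : T -> Prop) : Prop :=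
  exists l : list T, forall x, P x -> In x l.

Definition infinite_set {T : Type} (P : T -> Prop) : Prop := ~ finite_set P.

Definition card_ge {T : Type} (P : T -> Prop) (n : nat) : Prop :=
  exists s : list T, NoDup s /\ length s = n /\ forall x, In x s -> P x.

Definition card_le {T : Type} (P : T -> Prop) (n : nat) : Prop :=
  exists s : list T, length s <= n /\ forall x, P x -> In x s.

Definition countably_infinite (V : Type) : Prop :=
  exists e : nat -> V, (forall m n, e m = e n -> m = n) /\ (forall v, exists n, e n = v).

Definition cofinite_degree {V : Type} (adj : V -> V -> Prop) (v : V) : Prop :=
  finite_set (fun u => ~ adj v u).

Definition independent {V : Type} (adj : V -> V -> Prop) (A : V -> Prop) : Prop :=
  forall x y, A x -> A y -> ~ adj x y.

Definition nbhd {V : Type} (adj : V -> V -> Prop) (A : V -> Prop) : V -> Prop :=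
  fun u => exists v, A v /\ adj v u.

Definition strongly_contracting {V : Type} (adj : V -> V -> Prop) : Prop :=
  exists k : nat, forall l : nat, exists A : V -> Prop,
    independent adj A /\ card_ge A l /\ card_le (nbhd adj A) k.

Definition contains_cofinite_copy {V : Type} (F : V -> V -> Prop)
    (H : nat -> nat -> Prop) : Prop :=
  exists f : V -> nat,
    (forall x y, f x = f y -> x = y) /\
    (forall x y, F x y -> H (f x) (f y)) /\
    finite_set (fun n => ~ exists x, f x = n).

(* Main.v *)
Require Import Defs.
From Stdlib Require Import List Arith Lia ClassicalEpsilon Classical Bool.
Import ListNotations.

Fixpoint Tf (L : nat -> nat) (j : nat) : nat :=
  match j with 0 => 0 | S j' => Tf L j' + S (L j') end.

Lemma Tf_ge L j : j <= Tf L j.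
Proof. induction j; simpl; lia. Qed.

Lemma Tf_mono L i j : i <= j -> Tf L i <= Tf L j.
Proof. induction 1; simpl; lia. Qed.

Definition HG (L : nat -> nat) (a b : nat) : Prop :=
  (exists i j, a = 2*i /\ b = 2*j /\ i <> j) \/
  (exists i j, a = 2*i /\ b = 2*j+1 /\ Tf L (S i) <= j) \/
  (exists i j, a = 2*i+1 /\ b = 2*j /\ Tf L (S j) <= i).

Lemma HG_graph L : is_graph (HG L).
Proof.
  split.
  - intros x y [(i&j&?&?&?)|[(i&j&?&?&?)|(i&j&?&?&?)]].
    + left; exists j, i; repeat split; auto.
    + right; right; exists j, i; repeat split; auto.
    + right; left; exists j, i; repeat split; auto.
  - intros x [(i&j&?&?&?)|[(i&j&?&?&?)|(i&j&?&?&?)]]; lia.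
Qed.

Lemma in_le_max l x : In x l -> x <= list_max l.
Proof.
  intro H. assert (Hf := proj1 (list_max_le l (list_max l)) (le_n _)).
  rewrite Forall_forall in Hf. auto.
Qed.

Lemma parity u : exists j, u = 2*j \/ u = 2*j+1.
Proof.
  destruct (Nat.Even_or_Odd u) as [[j Hj]|[j Hj]]; exists j; lia.
Qed.

Lemma HG_inf L : infinite_set (cofinite_degree (HG L)).
Proof.
  intros [lst Hl].
  set (i := S (list_max lst)).
  assert (Hc : cofinite_degree (HG L) (2*i)).
  { exists (seq 0 (2*Tf L (S i) + 2*i + 2)). intros u Hu.
    apply in_seq. split; [lia|].
    destruct (Nat.lt_ge_cases u (2*Tf L (S i) + 2*i + 2)) as [|Hge]; [lia|].
    exfalso; apply Hu. destruct (parity u) as [j [Hj|Hj]].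
    - left. exists i, j. repeat split; lia.
    - right; left. exists i, j. repeat split; lia. }
  apply Hl in Hc. apply in_le_max in Hc. unfold i in Hc. lia.
Qed.

Lemma NoDup_map_inj {A B} (g : A -> B) l :
  NoDup l -> (forall a b, In a l -> In b l -> g a = g b -> a = b) -> NoDup (map g l).
Proof.
  induction l as [|a l IH]; simpl; intros Hn Hi; constructor.
  - inversion Hn; subst. intro Hin. apply in_map_iff in Hin as [b [Hb Hb']].
    assert (b = a) by (apply Hi; auto). subst. contradiction.
  - inversion Hn; subst. apply IH; auto.
Qed.

Lemma dir1 (V : Type) (F : V -> V -> Prop) :
  countably_infinite V ->
  (forall H : nat -> nat -> Prop,
      is_graph H -> infinite_set (cofinite_degree H) ->
      contains_cofinite_copy F H) -> strongly_contracting F.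
Proof.
  intros [e _] Hall. apply NNPP. intro Hsc.
  assert (Hl : forall k, exists l, forall A, independent F A -> card_ge A l -> ~ card_le (nbhd F A) k).
  { intro k. apply NNPP; intro Hno. apply Hsc. exists k. intro l. apply NNPP; intro h2.
    apply Hno. exists l. intros A h1 h3 h4. apply h2. exists A. auto. }
  set (L := fun k => proj1_sig (constructive_indefinite_description _ (Hl k))).
  assert (HL : forall k A, independent F A -> card_ge A (L k) -> ~ card_le (nbhd F A) k).
  { intro k. exact (proj2_sig (constructive_indefinite_description _ (Hl k))). }
  destruct (Hall (HG L) (HG_graph L) (HG_inf L)) as [f [finj [fhom [lst Hlst]]]].
  set (kk := S (list_max lst)). set (t := Tf L kk).
  assert (Ht : kk <= t) by apply Tf_ge.
  assert (Hsurj : forall m, t <= m -> exists x, f x = 2*m+1).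
  { intros m Hm. apply NNPP; intro Hn. apply Hlst, in_le_max in Hn. unfold kk in Ht. lia. }
  assert (inh : inhabited V) by exact (inhabits (e 0)).
  set (A := fun x => exists m, t <= m < t + L kk /\ f x = 2*m+1).
  apply (HL kk A).
  - intros x y [m [_ Hm]] [m' [_ Hm']] Hxy. apply fhom in Hxy. rewrite Hm, Hm' in Hxy.
    destruct Hxy as [(i&j&?&?&?)|[(i&j&?&?&?)|(i&j&?&?&?)]]; lia.
  - set (g := fun m => epsilon inh (fun x => f x = 2*m+1)).
    assert (Hg : forall m, t <= m -> f (g m) = 2*m+1).
    { intros m Hm. unfold g. apply epsilon_spec. auto. }
    exists (map g (seq t (L kk))). split; [|split].
    + apply NoDup_map_inj; [apply seq_NoDup|]. intros a b Ha Hb Hab.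
      apply in_seq in Ha, Hb. assert (f (g a) = f (g b)) by congruence.
      rewrite !Hg in H by lia. lia.
    + rewrite length_map, length_seq. reflexivity.
    + intros x Hx. apply in_map_iff in Hx as [m [<- Hm]]. apply in_seq in Hm.
      exists m. split; [lia|]. apply Hg; lia.
  - set (h := fun j => epsilon inh (fun x => f x = 2*j)).
    exists (map h (seq 0 kk)). split; [rewrite length_map, length_seq; lia|].
    intros u [v [[m [Hm Hfv]] Hvu]]. apply fhom in Hvu. rewrite Hfv in Hvu.
    destruct Hvu as [(i&j&?&?&?)|[(i&j&?&?&?)|(i&j&Hi&Hj&Hle)]]; try lia.
    assert (i = m) by lia. subst i.
    assert (Hjk : j < kk).
    { destruct (Nat.lt_ge_cases j kk) as [|Hge]; auto.
      assert (Tf L (S kk) <= Tf L (S j)) by (apply Tf_mono; lia).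
      assert (Tf L (S kk) = t + S (L kk)) by reflexivity. lia. }
    apply in_map_iff. exists j. split; [|apply in_seq; lia].
    apply finj. unfold h. rewrite Hj. apply epsilon_spec with (P := fun x => f x = 2*j). exists u; exact Hj.
Qed.

Definition pdec (P : Prop) : bool := if excluded_middle_informative P then true else false.
Lemma pdec_iff P : pdec P = true <-> P.
Proof. unfold pdec. destruct (excluded_middle_informative P); split; intros; auto; discriminate || contradiction. Qed.

Lemma fst_func {A B} (l : list (A*B)) x a b :
  NoDup (map fst l) -> In (x,a) l -> In (x,b) l -> a = b.
Proof.
  induction l as [|[y c] l IH]; simpl; intros Hn Ha Hb; [contradiction|].
  inversion Hn; subst.
  destruct Ha as [Ha|Ha], Hb as [Hb|Hb].
  - congruence.
  - inversion Ha; subst. exfalso. apply H1. apply (in_map fst) in Hb. exact Hb.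
  - inversion Hb; subst. exfalso. apply H1. apply (in_map fst) in Ha. exact Ha.
  - auto.
Qed.

Lemma snd_func {A B} (l : list (A*B)) x y a :
  NoDup (map snd l) -> In (x,a) l -> In (y,a) l -> x = y.
Proof.
  induction l as [|[z c] l IH]; simpl; intros Hn Ha Hb; [contradiction|].
  inversion Hn; subst.
  destruct Ha as [Ha|Ha], Hb as [Hb|Hb].
  - congruence.
  - inversion Ha; subst. exfalso. apply H1. apply (in_map snd) in Hb. exact Hb.
  - inversion Hb; subst. exfalso. apply H1. apply (in_map snd) in Ha. exact Ha.
  - auto.
Qed.

Lemma in_fst {A B} (l : list (A*B)) x n : In (x,n) l -> In x (map fst l).
Proof. intro H. apply (in_map fst) in H. exact H. Qed.
Lemma in_snd {A B} (l : list (A*B)) x n : In (x,n) l -> In n (map snd l).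
Proof. intro H. apply (in_map snd) in H. exact H. Qed.

Definition Inv {V} (F : V -> V -> Prop) (H : nat -> nat -> Prop) (K M0 : nat)
  (m : list (V*nat)) (Q : list nat) (M : nat) : Prop :=
  NoDup (map fst m) /\ NoDup (map snd m) /\
  (forall x y nx ny, In (x,nx) m -> In (y,ny) m -> F x y -> H nx ny) /\
  (forall x nx, In (x,nx) m -> (exists y, F x y /\ ~ In y (map fst m)) ->
     cofinite_degree H nx /\ (forall q, In q Q -> H nx q) /\
     (forall n, M <= n -> n <> nx -> H nx n)) /\
  NoDup Q /\ length Q = K /\
  (forall q, In q Q -> cofinite_degree H q /\ ~ In q (map snd m) /\
     (forall n, M <= n -> n <> q -> H q n)) /\
  (forall q q', In q Q -> In q' Q -> q <> q' -> H q q') /\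
  (forall n, n < M -> In n (map snd m) \/ n < M0 \/ In n Q).

Lemma ext_inv {V} (F : V -> V -> Prop) H K M0 m Q M new (Ab : V -> Prop) Q' M' :
 is_graph F -> is_graph H ->
 Inv F H K M0 m Q M ->
 NoDup (map fst (new ++ m)) -> NoDup (map snd (new ++ m)) ->
 (forall x n, In (x,n) new -> ~ In x (map fst m) /\ ~ In n (map snd m) /\
      (In n Q \/ (M <= n /\ Ab x))) ->
 (forall x n, In (x,n) new -> ~ In n Q -> forall y, F x y -> In y (map fst (new ++ m))) ->
 independent F Ab ->
 (forall q, In q Q -> In q (map snd new)) ->
 NoDup Q' -> length Q' = K ->
 (forall q, In q Q' -> cofinite_degree H q /\ ~ In q (map snd (new ++ m)) /\
     (forall n, M' <= n -> n <> q -> H q n) /\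
     (forall c, In c Q \/ (In c (map snd m) /\ cofinite_degree H c) -> H q c)) ->
 (forall q q', In q Q' -> In q' Q' -> q <> q' -> H q q') ->
 M <= M' ->
 (forall n, M <= n < M' -> In n (map snd (new ++ m)) \/ In n Q') ->
 Inv F H K M0 (new ++ m) Q' M'.
Proof.
  intros [Fsym Firr] [Hsym Hirr] (J1&J2&J3&J4&J5&J6&J7&J8&J9) N1 N2 E2 E3 E4 E5 Q1 Q2 Q3 Q4 HMM E7.
  assert (newold : forall x nx y ny, In (x,nx) new -> In (y,ny) m -> F x y -> H nx ny).
  { intros x nx y ny Hx Hy Fxy.
    destruct (E2 _ _ Hx) as (Hx1&Hx2&Hx3).
    destruct (J4 y ny Hy) as (_&HQ&HM). { exists x. split; auto. }
    apply Hsym. destruct Hx3 as [Hq|[Hle _]]; auto.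
    apply HM; auto. intro; subst. apply Hx2. eapply in_snd; eauto. }
  assert (newnew : forall x nx y ny, In (x,nx) new -> In (y,ny) new -> F x y -> H nx ny).
  { intros x nx y ny Hx Hy Fxy.
    assert (Hne : nx <> ny).
    { intro; subst. assert (x = y) by (eapply snd_func; [exact N2| |]; apply in_app_iff; left; eauto).
      subst. eapply Firr; eauto. }
    destruct (E2 _ _ Hx) as (_&_&[Hqx|[Hmx Hax]]), (E2 _ _ Hy) as (_&_&[Hqy|[Hmy Hay]]).
    all: first [ solve [apply J8; auto] | solve [apply (proj2 (proj2 (J7 _ Hqx))); [lia|congruence]]
               | solve [apply Hsym; apply (proj2 (proj2 (J7 _ Hqy))); [lia|congruence]]
               | exfalso; exact (E4 x y Hax Hay Fxy) ]. }
  split; [exact N1|]. split; [exact N2|]. split.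
  { intros x y nx ny Hx Hy Fxy. apply in_app_iff in Hx, Hy.
    destruct Hx as [Hx|Hx], Hy as [Hy|Hy]; eauto. }
  split.
  { intros x nx Hx [y [Fxy Hy]]. apply in_app_iff in Hx. destruct Hx as [Hx|Hx].
    + destruct (classic (In nx Q)) as [Hq|Hq].
      * destruct (J7 _ Hq) as (C1&_&C3). split; auto. split.
        -- intros q Hq'. apply Hsym. apply (Q3 _ Hq'). auto.
        -- intros n Hn. apply C3. lia.
      * exfalso. apply Hy. apply (E3 x nx); auto.
    + destruct (J4 x nx Hx) as (C1&_&C3).
      { exists y. split; auto. rewrite map_app, in_app_iff in Hy. tauto. }
      split; auto. split.
      * intros q Hq'. apply Hsym. apply (Q3 _ Hq'). right. split; auto. eapply in_snd; eauto.
      * intros n Hn. apply C3. lia. }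
  split; [exact Q1|]. split; [exact Q2|]. split.
  { intros q Hq. destruct (Q3 q Hq) as (?&?&?&?). auto. }
  split; [exact Q4|].
  intros n Hn. destruct (Nat.lt_ge_cases n M) as [Hlt|Hge].
  + destruct (J9 n Hlt) as [Hr|[Hr|Hr]].
    * left. rewrite map_app, in_app_iff. auto.
    * auto.
    * left. rewrite map_app, in_app_iff. auto.
  + destruct (E7 n (conj Hge Hn)); auto.
Qed.

Lemma map_fst_combine {A B} (l1 : list A) (l2 : list B) :
  length l1 = length l2 -> map fst (combine l1 l2) = l1.
Proof. revert l2; induction l1; destruct l2; simpl; intros; try discriminate; f_equal; auto. Qed.
Lemma map_snd_combine {A B} (l1 : list A) (l2 : list B) :
  length l1 = length l2 -> map snd (combine l1 l2) = l2.
Proof. revert l2; induction l1; destruct l2; simpl; intros; try discriminate; f_equal; auto. Qed.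

Lemma In_firstn' {A} n (l : list A) x : In x (firstn n l) -> In x l.
Proof. intro H. rewrite <- (firstn_skipn n l). apply in_app_iff. auto. Qed.
Lemma In_skipn' {A} n (l : list A) x : In x (skipn n l) -> In x l.
Proof. intro H. rewrite <- (firstn_skipn n l). apply in_app_iff. auto. Qed.
Lemma NoDup_firstn' {A} n (l : list A) : NoDup l -> NoDup (firstn n l).
Proof. intro H. rewrite <- (firstn_skipn n l) in H. eapply NoDup_app_remove_r; eauto. Qed.
Lemma NoDup_skipn' {A} n (l : list A) : NoDup l -> NoDup (skipn n l).
Proof. intro H. rewrite <- (firstn_skipn n l) in H. eapply NoDup_app_remove_l; eauto. Qed.
Lemma firstn_skipn_disj {A} n (l : list A) x : NoDup l -> In x (firstn n l) -> ~ In x (skipn n l).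
Proof.
  intro H. rewrite <- (firstn_skipn n l) in H. revert H. generalize (firstn n l) (skipn n l).
  intros l1 l2 Hn Hx Hy. induction l1 as [|a l1 IH]; simpl in *; [auto|].
  inversion Hn; subst. destruct Hx as [<-|Hx]; auto. apply H1. apply in_app_iff. auto.
Qed.

Lemma avoid (P : nat -> Prop) : infinite_set P -> forall L, exists c, P c /\ ~ In c L.
Proof.
  intros Hinf L. apply NNPP; intro Hn. apply Hinf. exists L. intros x Hx.
  apply NNPP; intro Hx'. apply Hn. eauto.
Qed.

Lemma cof_list (H : nat -> nat -> Prop) (Cs : list nat) : (forall c, In c Cs -> cofinite_degree H c) ->
  exists B, forall c, In c Cs -> forall u, ~ H c u -> In u B.
Proof.
  induction Cs as [|c Cs IH]; intros Hc.
  - exists []. intros c [].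
  - destruct IH as [B HB]. { intros; apply Hc; simpl; auto. }
    destruct (Hc c (or_introl eq_refl)) as [B1 HB1].
    exists (B1 ++ B). intros c' [<-|Hc'] u Hu; apply in_app_iff; [left; apply HB1; auto | right; eapply HB; eauto].
Qed.

Lemma bound_list (B : list nat) : exists b, forall u, In u B -> u < b.
Proof.
  induction B as [|a B [b Hb]]. - exists 0. intros u []. - exists (S (a + b)). intros u [<-|Hu]; [lia|]. specialize (Hb u Hu). lia.
Qed.

Lemma choose_reserve (H : nat -> nat -> Prop) : is_graph H -> infinite_set (cofinite_degree H) ->
  forall L Cs, (forall c, In c Cs -> cofinite_degree H c) -> forall n,
  exists Q, NoDup Q /\ length Q = n /\
    (forall q, In q Q -> cofinite_degree H q /\ ~ In q L /\ (forall c, In c Cs -> H q c)) /\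
    (forall q q', In q Q -> In q' Q -> q <> q' -> H q q').
Proof.
  intros [Hsym Hirr] Hinf L Cs HCs n. induction n as [|n [Q (Q1&Q2&Q3&Q4)]].
  - exists []. repeat split; simpl; try tauto. constructor.
  - destruct (cof_list H (Cs ++ Q)) as [B HB].
    { intros c Hc. apply in_app_iff in Hc as [Hc|Hc]; auto. apply Q3; auto. }
    destruct (avoid _ Hinf (L ++ B ++ Q)) as [c [Hc Hc']].
    rewrite !in_app_iff in Hc'.
    assert (adj : forall c', In c' (Cs ++ Q) -> H c c').
    { intros c' Hin. apply Hsym. apply NNPP; intro Hn. apply Hc'. right; left. eapply HB; eauto. }
    exists (c :: Q). split; [constructor; tauto|]. split; [simpl; lia|]. split.
    + intros q [<-|Hq].
      * split; auto. split; [tauto|]. intros c' Hc''. apply adj. apply in_app_iff; auto.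
      * apply Q3; auto.
    + intros q q' [<-|Hq] [<-|Hq'] Hne; try congruence.
      * apply adj. apply in_app_iff; auto.
      * apply Hsym, adj. apply in_app_iff; auto.
      * auto.
Qed.

Lemma reserve_bound (H : nat -> nat -> Prop) (Q : list nat) : (forall q, In q Q -> cofinite_degree H q) ->
  exists b, forall q, In q Q -> forall n, b <= n -> H q n.
Proof.
  intro HQ. destruct (cof_list H Q HQ) as [B HB]. destruct (bound_list B) as [b Hb].
  exists b. intros q Hq n Hn. apply NNPP; intro Hn'. specialize (Hb n (HB q Hq n Hn')). lia.
Qed.

Lemma generic {V} (F : V -> V -> Prop) H k M0 m Q M (v : V) :
 Inv F H (S k) M0 m Q M ->
 exists newG Qa, NoDup (map fst (newG ++ m)) /\ NoDup (map snd (newG ++ m)) /\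
  (forall x n, In (x,n) newG -> ~ In x (map fst m) /\ ~ In n (map snd m) /\ In n Q) /\
  In v (map fst (newG ++ m)) /\
  NoDup Qa /\ incl Qa Q /\ k <= length Qa /\
  (forall q, In q Qa -> ~ In q (map snd (newG ++ m))) /\
  (forall q, In q Q -> In q (map snd newG) \/ In q Qa).
Proof.
  intros (J1&J2&J3&J4&J5&J6&J7&J8&J9).
  destruct (classic (In v (map fst m))) as [Hv|Hv].
  - exists [], Q. simpl. split; [auto|]. split; [auto|]. split; [intros x n []|].
    split; [auto|]. split; [auto|]. split; [intros q Hq; auto|]. split; [lia|].
    split; [intros q Hq; apply J7; auto|]. auto.
  - destruct Q as [|q0 Q1]; [simpl in J6; discriminate|].
    exists [(v,q0)], Q1. simpl. inversion J5; subst.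
    destruct (J7 q0 (or_introl eq_refl)) as (_&Hq0&_).
    split; [constructor; auto|]. split; [constructor; auto|].
    split; [intros x n [Hx|[]]; inversion Hx; subst; auto|].
    split; [auto|]. split; [auto|]. split; [intros q Hq; simpl; auto|].
    split; [simpl in J6; lia|]. split.
    + intros q Hq [Hq'|Hq']. subst; contradiction. apply (J7 q); simpl; auto.
    + intros q [<-|Hq]; auto.
Qed.

Lemma step {V} (F : V -> V -> Prop) (H : nat -> nat -> Prop) k M0 m Q M (v : V) :
 is_graph F -> is_graph H -> infinite_set (cofinite_degree H) ->
 (forall l, exists A, independent F A /\ card_ge A l /\ card_le (nbhd F A) k) ->
 Inv F H (S k) M0 m Q M ->
 exists m' Q' M', Inv F H (S k) M0 m' Q' M' /\ incl m m' /\ M < M' /\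
   In v (map fst m') /\ (forall q, In q Q -> In q (map snd m')).
Proof.
  intros HF HH Hinf Hsc Hinv.
  pose proof Hinv as (J1&J2&J3&J4&J5&J6&J7&J8&J9).
  set (Cs := Q ++ filter (fun c => pdec (cofinite_degree H c)) (map snd m)).
  assert (HCs : forall c, In c Cs -> cofinite_degree H c).
  { intros c Hc. apply in_app_iff in Hc as [Hc|Hc]; [apply J7; auto|].
    apply filter_In in Hc. apply pdec_iff. tauto. }
  destruct (choose_reserve H HH Hinf (map snd m ++ Q) Cs HCs (S k)) as [Q' (Q1&Q2&Q3&Q4)].
  destruct (reserve_bound H Q' (fun q Hq => proj1 (Q3 q Hq))) as [b' Hb'].
  set (M' := S (M + b')).
  destruct (generic F H k M0 m Q M v Hinv) as (newG & Qa & G1 & G2 & G3 & G4 & G5 & G6 & G7 & G8 & G9).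
  set (m1 := newG ++ m). set (D1 := map fst m1).
  destruct (Hsc (length m1 + length Qa + M' + 1)) as (A & Aind & (s & Hs1 & Hs2 & Hs3) & (nb & Hnb1 & Hnb2)).
  set (A' := filter (fun x => negb (pdec (In x D1))) s).
  assert (FA1 : forall x, In x A' <-> In x s /\ ~ In x D1).
  { intro x. unfold A'. rewrite filter_In. split; intros [h1 h2]; split; auto.
    - intro h. apply pdec_iff in h. rewrite h in h2. discriminate.
    - destruct (pdec (In x D1)) eqn:E; [exfalso; apply h2; apply (proj1 (pdec_iff _)); exact E|reflexivity]. }
  assert (FA2 : NoDup A') by (apply NoDup_filter; auto).
  set (eqdec := fun x y : V => excluded_middle_informative (x = y)).
  set (P := nodup eqdec (filter (fun u => pdec ((exists a, In a A' /\ F a u) /\ ~ In u D1)) nb)).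
  assert (FP1 : forall u, In u P <-> (exists a, In a A' /\ F a u) /\ ~ In u D1).
  { intro u. unfold P. rewrite nodup_In, filter_In, pdec_iff. split; [tauto|].
    intros [[a [Ha Hau]] Hu]. split; [|split; eauto].
    apply Hnb2. exists a. split; auto. apply Hs3. apply FA1 in Ha. tauto. }
  assert (FP2 : NoDup P) by apply NoDup_nodup.
  assert (FP3 : length P <= k).
  { assert (length P <= length nb); [|lia]. apply NoDup_incl_length; auto.
    intros u Hu. unfold P in Hu. rewrite nodup_In, filter_In in Hu. tauto. }
  assert (FP4 : forall u, In u P -> ~ In u A').
  { intros u Hu Hu'. apply FP1 in Hu as [[a [Ha Hau]] _].
    apply FA1 in Ha, Hu'. eapply Aind; [apply Hs3; apply Ha | apply Hs3; apply Hu' | exact Hau]. }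
  set (Qf := firstn (length P) Qa). set (Qb := skipn (length P) Qa).
  assert (HQf : length Qf = length P) by (apply firstn_length_le; lia).
  set (newP := combine P Qf).
  assert (fP : map fst newP = P) by (apply map_fst_combine; auto).
  assert (sP : map snd newP = Qf) by (apply map_snd_combine; auto).
  set (m2 := newP ++ m1).
  set (T := Qb ++ filter (fun n => pdec (~ In n (map snd m2) /\ ~ In n Q /\ ~ In n Q')) (seq M (M' - M))).
  assert (HT : forall n, In n T <-> In n Qb \/ (M <= n < M' /\ ~ In n (map snd m2) /\ ~ In n Q /\ ~ In n Q')).
  { intro n. unfold T. rewrite in_app_iff, filter_In, pdec_iff, in_seq.
    split; intros [h|h]; auto; right; lia || (split; [lia|tauto]). }
  assert (lenT : length T <= length Qa + M').
  { unfold T. rewrite length_app. unfold Qb. rewrite length_skipn.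
    pose proof (filter_length_le (fun n => pdec (~ In n (map snd m2) /\ ~ In n Q /\ ~ In n Q')) (seq M (M' - M))).
    rewrite length_seq in H0. lia. }
  assert (lenA' : length s <= length A' + length m1).
  { pose proof (filter_length (fun x => negb (pdec (In x D1))) s) as E.
    fold A' in E.
    assert (length (filter (fun x => negb (negb (pdec (In x D1)))) s) <= length D1).
    { apply NoDup_incl_length; [apply NoDup_filter; auto|].
      intros x Hx. apply filter_In in Hx as [_ Hx]. rewrite negb_involutive in Hx.
      apply pdec_iff; auto. }
    assert (length D1 = length m1) by apply length_map. lia. }
  assert (TA : length T <= length A') by lia.
  set (Af := firstn (length T) A').
  assert (HAf : length Af = length T) by (apply firstn_length_le; lia).
  set (newT := combine Af T).
  assert (fT : map fst newT = Af) by (apply map_fst_combine; auto).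
  assert (sT : map snd newT = T) by (apply map_snd_combine; auto).
  set (new := newT ++ newP ++ newG).
  assert (Hfst : map fst (new ++ m) = Af ++ P ++ D1).
  { unfold new, D1, m1. rewrite !map_app, fT, fP, <- !app_assoc. reflexivity. }
  assert (Hsnd : map snd (new ++ m) = T ++ Qf ++ map snd newG ++ map snd m).
  { unfold new. rewrite !map_app, sT, sP, <- !app_assoc. reflexivity. }
  assert (Hm2 : map snd m2 = Qf ++ map snd newG ++ map snd m).
  { unfold m2, m1. rewrite !map_app, sP. reflexivity. }
  assert (HD1 : D1 = map fst newG ++ map fst m) by (unfold D1, m1; apply map_app).
  assert (G1' := G1). rewrite map_app in G1'.
  assert (G2' := G2). rewrite map_app in G2'.
  assert (QaQ : forall q, In q Qf -> In q Q /\ ~ In q (map snd newG) /\ ~ In q (map snd m)).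
  { intros q Hq. apply In_firstn' in Hq. split; [apply G6; auto|].
    specialize (G8 q Hq). rewrite map_app, in_app_iff in G8. tauto. }
  assert (QbQ : forall q, In q Qb -> In q Q /\ ~ In q (map snd newG) /\ ~ In q (map snd m)).
  { intros q Hq. apply In_skipn' in Hq. split; [apply G6; auto|].
    specialize (G8 q Hq). rewrite map_app, in_app_iff in G8. tauto. }
  assert (newGQ : forall q, In q (map snd newG) -> In q Q).
  { intros q Hq. apply in_map_iff in Hq as [[x n] [<- Hx]]. apply (G3 x n Hx). }
  assert (Hsndn : map snd new = T ++ Qf ++ map snd newG).
  { unfold new. rewrite !map_app, sT, sP. reflexivity. }
  assert (E5n : forall q, In q Q -> In q (map snd new)).
  { intros q Hq. rewrite Hsndn, !in_app_iff. destruct (G9 q Hq) as [h|h]; auto.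
    rewrite <- (firstn_skipn (length P) Qa) in h. apply in_app_iff in h as [h|h]; auto.
    left. apply HT. auto. }
  assert (E5 : forall q, In q Q -> In q (map snd (new ++ m))).
  { intros q Hq. rewrite map_app, in_app_iff. auto. }
  exists (new ++ m), Q', M'.
  split.
  2:{ split; [intros a Ha; apply in_app_iff; auto|]. split; [unfold M'; lia|]. split; auto.
      rewrite Hfst, HD1, !in_app_iff. unfold m1 in G4. rewrite map_app, in_app_iff in G4. tauto. }
  apply (ext_inv F H (S k) M0 m Q M new (fun x => In x A') Q' M'); auto.
  -
    rewrite Hfst. apply NoDup_app; [apply NoDup_firstn'; auto| |].
    + apply NoDup_app; [exact FP2 | exact G1 | intros u Hu; apply FP1 in Hu; tauto].
    + intros x Hx. apply In_firstn' in Hx. rewrite in_app_iff. intros [h|h].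
      * apply (FP4 x h Hx).
      * apply FA1 in Hx. tauto.
  -
    rewrite Hsnd. apply NoDup_app; [|apply NoDup_app|].
    + unfold T. apply NoDup_app; [apply NoDup_skipn'; auto|apply NoDup_filter, seq_NoDup|].
      intros n Hn Hn'. apply filter_In in Hn' as [_ Hn']. apply (proj1 (pdec_iff _)) in Hn'.
      apply QbQ in Hn. tauto.
    + apply NoDup_firstn'; auto.
    + auto.
    + intros q Hq. apply QaQ in Hq. rewrite in_app_iff. tauto.
    + intros n Hn. apply HT in Hn as [Hn|Hn].
      * rewrite !in_app_iff. intros [h|[h|h]].
        -- exact (firstn_skipn_disj (length P) Qa n G5 h Hn).
        -- apply QbQ in Hn; tauto.
        -- apply QbQ in Hn; tauto.
      * rewrite <- Hm2. tauto.
  -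
    intros x n Hx. unfold new in Hx. rewrite !in_app_iff in Hx.
    destruct Hx as [Hx|[Hx|Hx]].
    + pose proof (in_combine_l _ _ _ _ Hx) as Hx1. pose proof (in_combine_r _ _ _ _ Hx) as Hx2.
      apply In_firstn' in Hx1. pose proof Hx1 as Hx1'. apply FA1 in Hx1'.
      rewrite HD1, in_app_iff in Hx1'.
      split; [tauto|]. apply HT in Hx2 as [h|h].
      * apply QbQ in h. tauto.
      * rewrite Hm2, !in_app_iff in h. split; [tauto|]. right. split; [lia|auto].
    + pose proof (in_combine_l _ _ _ _ Hx) as Hx1. pose proof (in_combine_r _ _ _ _ Hx) as Hx2.
      apply FP1 in Hx1. rewrite HD1, in_app_iff in Hx1. apply QaQ in Hx2. tauto.
    + apply G3 in Hx. tauto.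
  -
    intros x n Hx Hn y Fxy. unfold new in Hx. rewrite !in_app_iff in Hx.
    destruct Hx as [Hx|[Hx|Hx]].
    + apply in_combine_l, In_firstn' in Hx.
      rewrite Hfst, !in_app_iff. destruct (classic (In y D1)); auto.
      right; left. apply FP1. split; eauto.
    + apply in_combine_r, QaQ in Hx. tauto.
    + apply G3 in Hx. tauto.
  -
    intros x y Hx Hy. apply FA1 in Hx, Hy. apply Aind; apply Hs3; tauto.
  -
    intros q Hq. destruct (Q3 q Hq) as (C1&C2&C3). rewrite in_app_iff in C2.
    split; auto. split; [|split].
    + rewrite Hsnd, !in_app_iff. intros [h|[h|[h|h]]].
      * apply HT in h as [h|h]; [apply QbQ in h|]; tauto.
      * apply QaQ in h; tauto.
      * apply newGQ in h; tauto.
      * tauto.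
    + intros n Hn _. apply (Hb' q Hq). unfold M' in Hn. lia.
    + intros c Hc. apply C3. unfold Cs. rewrite in_app_iff, filter_In, pdec_iff. tauto.
  - unfold M'; lia.
  - intros n Hn. destruct (classic (In n (map snd m2))) as [h|h].
    + left. rewrite Hsnd, !in_app_iff. rewrite Hm2, !in_app_iff in h. tauto.
    + destruct (classic (In n Q)) as [h'|h']; [left; apply E5; auto|].
      destruct (classic (In n Q')) as [h''|h'']; [right; auto|].
      left. rewrite Hsnd, in_app_iff. left. apply HT. right. tauto.
Qed.

Lemma dir2 (V : Type) (F : V -> V -> Prop) :
  is_graph F -> countably_infinite V -> strongly_contracting F ->
  forall H : nat -> nat -> Prop, is_graph H -> infinite_set (cofinite_degree H) ->
  contains_cofinite_copy F H.
Proof.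
  intros HF [e [einj esurj]] [k Hsc] H HH Hinf.
  destruct (choose_reserve H HH Hinf [] [] (fun c h => match h with end) (S k))
    as [Q0 (Q1&Q2&Q3&Q4)].
  destruct (reserve_bound H Q0 (fun q Hq => proj1 (Q3 q Hq))) as [M0 HM0].
  assert (Inv0 : Inv F H (S k) M0 [] Q0 M0).
  { split; [constructor|]. split; [constructor|]. split; [intros x y nx ny []|].
    split; [intros x nx []|]. split; [auto|]. split; [auto|]. split.
    - intros q Hq. split; [apply Q3; auto|]. split; [intros []|]. intros n Hn _. apply HM0; auto.
    - split; auto. }
  set (St := (list (V*nat) * list nat * nat)%type).
  set (InvS := fun s : St => Inv F H (S k) M0 (fst (fst s)) (snd (fst s)) (snd s)).
  set (stepP := fun (i : nat) (s s' : St) =>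
     InvS s' /\ incl (fst (fst s)) (fst (fst s')) /\ snd s < snd s' /\
     In (e i) (map fst (fst (fst s'))) /\
     (forall q, In q (snd (fst s)) -> In q (map snd (fst (fst s'))))).
  assert (ex : forall i (s : St), exists s' : St, InvS s -> stepP i s s').
  { intros i s. destruct (classic (InvS s)) as [Hs|Hs]; [|exists s; tauto].
    destruct (step F H k M0 (fst (fst s)) (snd (fst s)) (snd s) (e i) HF HH Hinf Hsc Hs)
      as (m' & Q' & M' & Hst).
    exists ((m', Q'), M'). intros _. exact Hst. }
  set (g := fun i s => proj1_sig (constructive_indefinite_description _ (ex i s))).
  assert (Hg : forall i s, InvS s -> stepP i s (g i s)).
  { intros i s. exact (proj2_sig (constructive_indefinite_description _ (ex i s))). }
  set (it := nat_rect (fun _ => St) ((@nil (V*nat), Q0), M0) (fun t st => g t st)).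
  assert (itS : forall t, it (S t) = g t (it t)) by reflexivity.
  assert (Iit : forall t, InvS (it t)).
  { induction t. - exact Inv0. - rewrite itS. apply Hg. auto. }
  assert (Sit : forall t, stepP t (it t) (it (S t))).
  { intro t. rewrite itS. apply Hg. auto. }
  assert (mono : forall t t', t <= t' -> incl (fst (fst (it t))) (fst (fst (it t')))).
  { induction 1. - intros a; auto. - intros a Ha. apply (Sit m). auto. }
  assert (Mge : forall t, t <= snd (it t)).
  { induction t; [lia|]. destruct (Sit t) as (_&_&h&_). lia. }
  assert (exf : forall x, exists n, exists t, In (x,n) (fst (fst (it t)))).
  { intro x. destruct (esurj x) as [i <-]. destruct (Sit i) as (_&_&_&h&_).
    apply in_map_iff in h as [[y n] [Hy Hin]]. simpl in Hy. subst y. eauto. }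
  set (f := fun x => proj1_sig (constructive_indefinite_description _ (exf x))).
  assert (Hf : forall x, exists t, In (x, f x) (fst (fst (it t)))).
  { intro x. exact (proj2_sig (constructive_indefinite_description _ (exf x))). }
  assert (both : forall t1 t2 (a b : V * nat), In a (fst (fst (it t1))) -> In b (fst (fst (it t2))) ->
     In a (fst (fst (it (max t1 t2)))) /\ In b (fst (fst (it (max t1 t2))))).
  { intros t1 t2 a b Ha Hb. split; [apply (mono t1)|apply (mono t2)]; auto; lia. }
  assert (cons : forall x n t, In (x,n) (fst (fst (it t))) -> f x = n).
  { intros x n t Hn. destruct (Hf x) as [t' Ht']. destruct (both _ _ _ _ Ht' Hn) as [h1 h2].
    destruct (Iit (max t' t)) as (J1&_). eapply fst_func; eauto. }
  exists f. split; [|split].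
  - intros x y Hxy. destruct (Hf x) as [t1 H1], (Hf y) as [t2 H2].
    destruct (both _ _ _ _ H1 H2) as [h1 h2]. rewrite Hxy in h1.
    destruct (Iit (max t1 t2)) as (_&J2&_). eapply snd_func; eauto.
  - intros x y Fxy. destruct (Hf x) as [t1 H1], (Hf y) as [t2 H2].
    destruct (both _ _ _ _ H1 H2) as [h1 h2].
    destruct (Iit (max t1 t2)) as (_&_&J3&_). eapply J3; eauto.
  - exists (seq 0 M0). intros n Hn. apply in_seq.
    destruct (Iit (S n)) as (_&_&_&_&_&_&_&_&J9).
    assert (Hlt : n < snd (it (S n))) by (specialize (Mge (S n)); lia).
    destruct (J9 n Hlt) as [h|[h|h]].
    + exfalso. apply in_map_iff in h as [[x n'] [Hx Hin]]. simpl in Hx. subst n'.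
      apply Hn. exists x. eapply cons; eauto.
    + lia.
    + exfalso. destruct (Sit (S n)) as (_&_&_&_&h'). apply h' in h.
      apply in_map_iff in h as [[x n'] [Hx Hin]]. simpl in Hx. subst n'.
      apply Hn. exists x. eapply cons; eauto.
Qed.

Theorem mainTheorem15 (V : Type) (F : V -> V -> Prop) :
  is_graph F -> countably_infinite V ->
  ((forall H : nat -> nat -> Prop,
      is_graph H -> infinite_set (cofinite_degree H) ->
      contains_cofinite_copy F H)
   <-> strongly_contracting F).
Proof.
  intros HF HV. split.
  - apply dir1; auto.
  - intros Hsc H HH Hinf. apply dir2; auto.
Qed.
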